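(* Let $(A,G)$ be an admissible pair with $A\in M_{Q_0}(\mathbb Z)$ and let $\{i_1,\ldots,i_n\}$ be a $G$-orbit in $Q_0$. Then for every permutation $\sigma\in\mathfrak S_n$, $$\mu_{i_n}\circ\cdots\circ\mu_{i_1}(A)=\mu_{i_{\sigma(n)}}\circ\cdots\circ\mu_{i_{\sigma(1)}}(A).$$
   Context: $Q_0$ finite; $A=(a_{ij})$ skew-symmetrizable ($DA$ skew-symmetric for a positive integer diagonal $D$). Mutation $\mu_k(B)=(b'_{ij})$: $b'_{ij}=-b_{ij}$ if $k\in\{i,j\}$, else $b_{ij}+\tfrac12(|b_{ik}|b_{kj}+b_{ik}|b_{kj}|)$. An automorphism of $A$ is a permutation $g$ of $Q_0$ with $a_{gi,gj}=a_{ij}$; a group $G$ of such permutations is admissible (and $(A,G)$ an admissible pair) if for distinct $i,j$ in the same $G$-orbit there is no path of length $1$ or $2$ from $i$ to $j$ in the valued quiver of $A$ (i.e. $a_{ij}\le0$ and no $k$ with $a_{ik}>0$, $a_{kj}>0$). *)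

(* Defs.v *)
(* Q_0 = 'I_n, integer matrices 'M[int]_n. *)
From mathcomp Require Import all_boot all_order all_algebra all_fingroup.
Set Implicit Arguments. Unset Strict Implicit. Unset Printing Implicit Defensive.
Import Order.TTheory GRing.Theory Num.Theory.
Local Open Scope ring_scope.

Definition skew_symmetrizable (n : nat) (A : 'M[int]_n) : Prop :=
  exists d : 'I_n -> int, (forall i, 0 < d i) /\
    forall i j, d i * A i j = - (d j * A j i).

(* Matrix mutation at k. Note (|b_ik| b_kj + b_ik |b_kj|)/2 is an integer. *)
Definition mutation (n : nat) (k : 'I_n) (B : 'M[int]_n) : 'M[int]_n :=
  \matrix_(i, j)
    if (i == k) || (j == k) then - B i j
    else B i j + ((`|B i k| * B k j + B i k * `|B k j|) %/ 2)%Z.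

(* mu_{s_m} o ... o mu_{s_1} (A) for s = [:: s_1; ...; s_m] *)
Definition mutate_seq (n : nat) (s : seq 'I_n) (A : 'M[int]_n) : 'M[int]_n :=
  foldl (fun B k => mutation k B) A s.

Definition is_automorphism (n : nat) (A : 'M[int]_n) (g : {perm 'I_n}) : Prop :=
  forall i j, A (g i) (g j) = A i j.

(* Admissible group: distinct i,j in the same G-orbit have no path of
   length 1 or 2 from i to j in the valued quiver. *)
Definition admissible (n : nat) (A : 'M[int]_n) (G : {group {perm 'I_n}}) : Prop :=
  (forall g, g \in G -> is_automorphism A g) /\
  forall i j, j \in orbit 'P G i -> i != j ->
    A i j <= 0 /\ ~ (exists k, 0 < A i k /\ 0 < A k j).

Definition admissible_pair (n : nat) (A : 'M[int]_n) (G : {group {perm 'I_n}}) : Prop :=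
  skew_symmetrizable A /\ admissible A G.

(* Main.v *)
Require Import Defs.
From mathcomp Require Import all_boot all_order all_algebra all_fingroup.
From mathcomp Require Import zify.
Set Implicit Arguments. Unset Strict Implicit. Unset Printing Implicit Defensive.
Import Order.TTheory GRing.Theory Num.Theory.

Section Aux.
Local Open Scope ring_scope.

Lemma f0l (b : int) : ((`|0| * b + 0 * `|b|) %/ 2)%Z = 0.
Proof. by rewrite normr0 !mul0r addr0. Qed.
Lemma f0r (a : int) : ((`|a| * 0 + a * `|0|) %/ 2)%Z = 0.
Proof. by rewrite normr0 !mulr0 addr0. Qed.

Definition zeroS n (S : pred 'I_n) (B : 'M[int]_n) :=
  forall x y, S x -> S y -> x != y -> B x y = 0.

Lemma zeroS_mut n (S : pred 'I_n) B k : S k -> zeroS S B -> zeroS S (mutation k B).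
Proof.
move=> Sk hB x y Sx Sy nxy; rewrite /mutation mxE.
case: ifP => [_|/norP [nx ny]]; first by rewrite hB // oppr0.
by rewrite hB // (hB x k) // f0l addr0.
Qed.

Lemma mut_comm n (B : 'M[int]_n) i j : i != j -> B i j = 0 -> B j i = 0 ->
  mutation i (mutation j B) = mutation j (mutation i B).
Proof.
move=> nij h1 h2; apply/matrixP => p q; rewrite /mutation !mxE.
have nji : j != i by rewrite eq_sym.
have hP : forall r, [\/ r = i, r = j | (r != i) && (r != j)].
  by move=> r; case: (eqVneq r i) => [->|?]; [constructor 1|case: (eqVneq r j) => [->|?]; [constructor 2|constructor 3; apply/andP]].
case: (hP p) => [->|->|/andP [npi npj]]; case: (hP q) => [->|->|/andP [nqi nqj]];
rewrite ?eqxx ?(negbTE nij) ?(negbTE nji) ?(negbTE npi) ?(negbTE nqi)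
  ?(negbTE npj) ?(negbTE nqj) /= ?mxE ?eqxx ?(negbTE nij) ?(negbTE nji)
  ?(negbTE npi) ?(negbTE nqi) ?(negbTE npj) ?(negbTE nqj) /=
  ?h1 ?h2 ?oppr0 ?opprK ?f0l ?f0r ?addr0 //.
by rewrite -!addrA [X in _ + X]addrC.
Qed.

Lemma move_front n (S : pred 'I_n) x u v B : zeroS S B -> S x -> all S u ->
  mutate_seq (u ++ x :: v) B = mutate_seq (x :: u ++ v) B.
Proof.
elim: u B => [//|y u IH] B hB Sx /= /andP [Sy Su].
rewrite /mutate_seq /= -/(mutate_seq _ _).
rewrite (IH _ (zeroS_mut Sy hB) Sx Su) /mutate_seq /=.
case: (eqVneq x y) => [->//|nxy].
by rewrite (mut_comm nxy) // hB // eq_sym.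
Qed.

Lemma perm_mut n (S : pred 'I_n) s : forall s' B, zeroS S B -> all S s ->
  perm_eq s s' -> mutate_seq s B = mutate_seq s' B.
Proof.
elim: s => [|x t IH] s' B hB aS hp.
  by move: hp; rewrite perm_sym => /perm_nilP ->.
have xs' : x \in s' by rewrite -(perm_mem hp) mem_head.
case/splitPr: xs' hp => u v hp.
move: (aS); rewrite /= => /andP [Sx St].
have aS' : all S (u ++ x :: v) by rewrite -(perm_all _ hp).
have Su : all S u by move: aS'; rewrite all_cat => /andP [].
rewrite (move_front v hB Sx Su).
have hp' : perm_eq t (u ++ v).
  rewrite -(perm_cons x); apply: (perm_trans hp); by rewrite -[x :: v]cat1s perm_catCA.
by rewrite /mutate_seq /= -!/(mutate_seq _ _) (IH _ _ (zeroS_mut Sx hB) St hp').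
Qed.
End Aux.

Local Open Scope ring_scope.

Theorem mainTheorem9 (n : nat) (A : 'M[int]_n) (G : {group {perm 'I_n}})
  (i : 'I_n) (s s' : seq 'I_n) :
  admissible_pair A G ->
  uniq s -> (forall x, (x \in s) = (x \in orbit 'P G i)) ->
  perm_eq s s' ->
  mutate_seq s A = mutate_seq s' A.
Proof.
move=> [[d [dpos hd]] [_ hadm]] _ hs hp.
apply: (@perm_mut _ (fun x => x \in orbit 'P G i)) => //; last first.
  by apply/allP => x; rewrite hs.
move=> x y Sx Sy nxy /=.
have yx : y \in orbit 'P G x by rewrite (orbit_trans Sy) // orbit_sym.
have xy : x \in orbit 'P G y by rewrite orbit_sym.
have [a1 _] := hadm x y yx nxy.
have nyx : y != x by rewrite eq_sym.
have [a2 _] := hadm y x xy nyx.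
have := hd x y; have := dpos x; have := dpos y.
move: a1 a2; lia.
Qed.
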